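(* Let $k\ge 1$ and $r\ge 0$ be integers. If a partition of the vertex set of $G_k$ into two sides has a biadjacency matrix of rank at most $r$ (over $\mathbb{Z}_2$), then the partition has at most $4r+1$ blocks.
   Context: $G_k$ is the following graph on vertices $v_1,\dots,v_{3^k}$ (ordered left to right along the boundary line of its drawing). It is defined by a drawing in the closed upper half-plane. The $3^k$ vertices lie on the horizontal boundary line and consecutive vertices are joined by a track along the line; vertices in odd positions are blue, in even positions yellow, and yellow vertices have no other tracks. The remaining tracks lie in levels $0,\dots,k-1$ (horizontal slabs, bottom to top). The bottom line of level $i$ carries points $p_{i,j}$, $0\le j<3^{k-i}/2$, left to right (the blue vertices for $i=0$, junctions for $i>0$), where tracks enter with vertical tangent. In level $i$, consecutive $p_{i,j},p_{i,j+1}$ are joined by a semicircle, subdivided by two junctions into three arcs when $j$ is a multiple of three (except that the single top-level semicircle joining $p_{k-1,0},p_{k-1,1}$ is not subdivided), a single track otherwise. For $i<k-1$ and each subdivided semicircle joining $p_{i,j},p_{i,j+1}$, tracks connect its two subdivision junctions to $p_{i+1,j/3}$, oriented so that each one connects $p_{i+1,j/3}$ downward by a smooth curve through the semicircle to $p_{i,j}$ and $p_{i,j+1}$. At every junction all incident tracks share a tangent. Two vertices of $G_k$ are adjacent iff some smooth curve contained in the union of the tracks (passing through junctions smoothly) connects them. (In particular each yellow vertex is adjacent exactly to its two neighbors in the order.) The biadjacency matrix of a partition $(A,B)$ of the vertices is the $0/1$ matrix over $\mathbb{Z}_2$ with rows indexed by $A$, columns by $B$, entry $1$ iff the two vertices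 are adjacent. A block of a partition of the vertices of $G_k$ into two sides is a maximal contiguous subsequence of $v_1,\dots,v_{3^k}$ all of whose vertices belong to the same side. *)

(* Defs.v *)
From mathcomp Require Import all_boot all_order all_algebra.
Set Implicit Arguments. Unset Strict Implicit. Unset Printing Implicit Defensive.

(* Vertices of G_k: 'I_(3^k); the 0-based position u stands for v_(u+1).
   Blue vertices are those at even 0-based positions (odd positions v_1, v_3, ...);
   the blue vertex at 0-based position 2j is the point p_(0,j). *)

(* desc i j b : the blue vertex p_(0,b) is reached by a smooth curve descending
   from the point p_(i,j) (through the two subdivision junctions of the
   semicircle joining p_(i-1,3j), p_(i-1,3j+1)). *)
Fixpoint desc (i j b : nat) : bool :=
  match i with
  | 0 => b == j
  | i'.+1 => desc i' (3 * j) b || desc i' (3 * j).+1 b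
  end.

(* Blue vertices p_(0,b), p_(0,c) are joined by a smooth curve: ascend from one,
   run along a semicircle joining p_(i,j), p_(i,j+1) in some level i < k
   (both points exist: 2(j+1) < 3^(k-i)), and descend to the other. *)
Definition blue_adj (k b c : nat) : bool :=
  [exists i : 'I_k, exists j : 'I_(3 ^ k),
     ((j.+1).*2 < 3 ^ (k - i)) &&
     ((desc i j b && desc i j.+1 c) || (desc i j c && desc i j.+1 b))].

Definition Gk_adj (k : nat) (u v : 'I_(3 ^ k)) : bool :=
  [|| u.+1 == v :> nat, v.+1 == u :> nat
    | [&& ~~ odd u, ~~ odd v & blue_adj k u./2 v./2]].

Definition biadj (k : nat) (A : {set 'I_(3 ^ k)}) : 'M['F_2]_(#|A|, #|~: A|) :=
  \matrix_(i < #|A|, j < #|~: A|)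
     ((Gk_adj (enum_val i) (enum_val j))%:R)%R.

Definition blocks (n : nat) (A : {set 'I_n}) : {set 'I_n * 'I_n} :=
  [set ab : 'I_n * 'I_n |
    [&& ab.1 <= ab.2,
        [forall x : 'I_n, (ab.1 <= x <= ab.2) ==> ((x \in A) == (ab.1 \in A))],
        (ab.1 == 0 :> nat) ||
          [exists x : 'I_n, (x.+1 == ab.1 :> nat) && ((x \in A) != (ab.1 \in A))]
      & (ab.2.+1 == n) ||
          [exists x : 'I_n, (x == ab.2.+1 :> nat) && ((x \in A) != (ab.2 \in A))]]].

(* Main.v *)
Require Import Defs.
From mathcomp Require Import all_boot all_order all_algebra.
From mathcomp Require Import zify.
Set Implicit Arguments. Unset Strict Implicit. Unset Printing Implicit Defensive.
Import GRing.Theory.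
Local Open Scope ring_scope.

Lemma rank_sub m1 n1 m n (f : 'I_m -> 'I_m1) (g : 'I_n -> 'I_n1) (M : 'M['F_2]_(m1, n1)) :
  (\rank (mxsub f g M) <= \rank M)%N.
Proof.
rewrite mxsubrc rowsubE.
apply: leq_trans (mxrankM_maxr _ _) _.
have -> : colsub g M = M *m colsub g 1%:M by rewrite mulmx_colsub mulmx1.
exact: mxrankM_maxl.
Qed.

Lemma tri_rank k (A : {set 'I_(3 ^ k)}) m (x y : 'I_m -> 'I_(3 ^ k)) :
  (forall i, x i \in A) -> (forall i, y i \notin A) ->
  (forall i, Gk_adj (x i) (y i)) ->
  ((forall i j : 'I_m, (i < j)%N -> Gk_adj (x i) (y j) = false) \/
   (forall i j : 'I_m, (i < j)%N -> Gk_adj (x j) (y i) = false)) ->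
  (m <= \rank (biadj A))%N.
Proof.
move=> xA yA dg tri.
have yA' : forall i, y i \in ~: A by move=> i; rewrite inE yA.
pose fx i := enum_rank_in (xA i) (x i).
pose fy i := enum_rank_in (yA' i) (y i).
pose N := mxsub fx fy (biadj A).
have NE : forall i j, N i j = (Gk_adj (x i) (y j))%:R.
  by move=> i j; rewrite !mxE /fx /fy !enum_rankK_in.
apply: leq_trans (rank_sub fx fy (biadj A)).
rewrite -/N.
have dN : \det N = 1.
  case: tri => tri.
    rewrite det_trig; last first.
      apply/is_trig_mxP => i j ij; by rewrite NE tri.
    by rewrite big1 // => i _; rewrite NE dg.
  rewrite -det_tr det_trig; last first.
    apply/is_trig_mxP => i j ij; by rewrite mxE NE tri.
  by rewrite big1 // => i _; rewrite mxE NE dg.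
rewrite mxrank_unit // unitmxE dN unitr1 //.
Qed.
Local Close Scope ring_scope.
Local Open Scope nat_scope.

Definition prv n (a : 'I_n) : 'I_n := Ordinal (leq_ltn_trans (leq_pred a) (ltn_ord a)).

Definition D n (A : {set 'I_n}) := [set a : 'I_n | (0 < a) && ((prv a \in A) != (a \in A))].

Lemma blocks_start n (A : {set 'I_n}) a b b' :
  (a, b) \in blocks A -> (a, b') \in blocks A -> b < b' -> False.
Proof.
rewrite !inE /= => /and4P [ab /forallP H1 _ H4] /and4P [_ /forallP H1' _ _] bb'.
have bn : b.+1 < n by apply: leq_ltn_trans bb' (ltn_ord b').
case/orP: H4 => [/eqP e|]; first by rewrite e ltnn in bn.
case/existsP => x /andP [/eqP xe sx].
have := H1 b; rewrite leqnn ab /= => /eqP hb.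
have := H1' x; rewrite xe bb' (leq_trans ab (leqnSn b)) /= => /eqP hx.
by rewrite hx hb eqxx in sx.
Qed.

Lemma blocks_bound n (A : {set 'I_n}) : #|blocks A| <= 1 + #|D A|.
Proof.
have inj : {in blocks A &, injective (@fst 'I_n 'I_n)}.
  move=> [a b] [a' b'] /= H H' e; subst a'.
  case: (ltngtP b b') => [bb|bb|/val_inj -> //].
    by case: (blocks_start H H' bb).
  by case: (blocks_start H' H bb).
rewrite -(card_in_imset inj).
have sub : (@fst 'I_n 'I_n) @: blocks A \subset [set a : 'I_n | val a == 0] :|: D A.
  apply/subsetP => a /imsetP [[a0 b] Hab ->] /=.
  move: Hab; rewrite !inE /= => /and4P [_ _ H3 _].
  case/orP: H3 => [-> //|/existsP [x /andP [/eqP xe sx]]].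
  apply/orP; right; apply/andP; split; first by rewrite -xe.
  have -> : prv a0 = x by apply/val_inj; rewrite /= -xe.
  exact: sx.
apply: leq_trans (subset_leq_card sub) _.
apply: leq_trans (leq_card_setU _ _) _.
rewrite leq_add2r.
apply/card_le1P => x; rewrite inE => /eqP x0 y; rewrite !inE.
apply/eqP/eqP => [y0|->//]; by apply/val_inj; rewrite /= y0.
Qed.

Lemma far k (u v : 'I_(3 ^ k)) : u + 3 <= v -> odd u != odd v -> Gk_adj u v = false.
Proof.
move=> uv po; rewrite /Gk_adj.
have -> : (u.+1 == v :> nat) = false by apply/eqP => e; move: uv; rewrite -e; lia.
have -> : (v.+1 == u :> nat) = false.
  by apply/eqP => e; move: uv; rewrite -e; lia.
by case: (odd u) (odd v) po => [] [].
Qed.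

Lemma far' k (u v : 'I_(3 ^ k)) : v + 3 <= u -> odd u != odd v -> Gk_adj u v = false.
Proof.
move=> uv po; rewrite /Gk_adj.
have -> : (u.+1 == v :> nat) = false.
  by apply/eqP => e; move: uv; rewrite -e; lia.
have -> : (v.+1 == u :> nat) = false by apply/eqP => e; move: uv; rewrite -e; lia.
by case: (odd u) (odd v) po => [] [].
Qed.

Lemma type_bound k (A : {set 'I_(3 ^ k)}) (p s : bool) :
  #|[set a in D A | (odd a == p) && ((a \in A) == s)]| <= \rank (biadj A).
Proof.
set T := [set a in D A | _].
pose e := @Order.enum_val _ _ (mem T).
have eT : forall i, e i \in T := fun i => Order.enum_valP i.
have mono : forall i j : 'I_#|T|, i < j -> e i < e j.
  move=> i j ij.
  have := @Order.le_enum_val _ _ ((@Order.TotalTheory.le_total _ 'I_(3 ^ k))) (mem T) i j.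
  rewrite (leEord (3 ^ k)) (leEord #|T|) => h.
  rewrite ltn_neqAle h (ltnW ij) andbT.
  apply/negP => /eqP /val_inj /Order.enum_val_inj ije.
  by rewrite ije ltnn in ij.
have eD : forall i : 'I_#|T|, [&& 0 < e i, (prv (e i) \in A) != (e i \in A), odd (e i) == p & (e i \in A) == s].
  by move=> i; move: (eT i); rewrite !inE -!andbA.
have gap : forall i j : 'I_#|T|, i < j -> prv (e i) + 3 <= e j.
  move=> i j ij; have lt := mono i j ij.
  have /and4P [pi0 _ /eqP pi _] := eD i; have /and4P [pj _ /eqP pj' _] := eD j.
  have ne : (e j : nat) != (e i).+1.
    by apply/eqP => ee; move: pj'; rewrite ee /= pi; by destruct p.
  move: lt ne pi0; rewrite /=; move: (nat_of_ord (e i)) (nat_of_ord (e j)) => a b; lia.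
have par : forall i j : 'I_#|T|, odd (prv (e i)) != odd (e j).
  move=> i j; have /and4P [pi0 _ /eqP pi _] := eD i; have /and4P [_ _ /eqP pj _] := eD j.
  rewrite /= pj -pi -{2}(prednK pi0) oddS; by case: (odd _).
have sides : forall i : 'I_#|T|, ((e i \in A) = s) /\ ((prv (e i) \in A) = ~~ s).
  move=> i; have /and4P [_ h _ /eqP hs] := eD i.
  by split => //; move: h; rewrite hs; destruct (prv (e i) \in A); destruct s.
have [hs|hs] : s = true \/ s = false by destruct s; [left|right].
- apply: (@tri_rank k A _ e (fun i => prv (e i))).
  + by move=> i; have [-> _] := sides i.
  + by move=> i; have [_ ->] := sides i; rewrite hs.
  + move=> i; have /and4P [pi0 _ _ _] := eD i.
    by rewrite /Gk_adj /= prednK // eqxx orbT.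
  + right => i j ij; apply: far'; first exact: gap.
    by rewrite eq_sym par.
- apply: (@tri_rank k A _ (fun i => prv (e i)) e).
  + by move=> i; have [_ ->] := sides i; rewrite hs.
  + by move=> i; have [-> _] := sides i; rewrite hs.
  + move=> i; have /and4P [pi0 _ _ _] := eD i.
    by rewrite /Gk_adj /= prednK // eqxx.
  + left => i j ij; apply: far; first exact: gap.
    by rewrite par.
Qed.

Theorem lemma12 (k r : nat) (A : {set 'I_(3 ^ k)}) :
  1 <= k -> \rank (biadj A) <= r -> #|blocks A| <= 4 * r + 1.
Proof.
move=> _ hr.
apply: leq_trans (blocks_bound A) _.
rewrite addnC leq_add2r.
pose T (p s : bool) := [set a in D A | (odd a == p) && ((a \in A) == s)].
have hT : forall p s, #|T p s| <= r := fun p s => leq_trans (type_bound A p s) hr.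
have sub : D A \subset (T false false :|: T false true) :|: (T true false :|: T true true).
  apply/subsetP => a aD; rewrite !inE; move: aD; rewrite inE => ->; rewrite /=.
  by case: (odd a); case: (a \in A).
apply: leq_trans (subset_leq_card sub) _.
apply: leq_trans (leq_card_setU _ _) _.
have -> : 4 * r = (r + r) + (r + r) by lia.
apply: leq_add; (apply: leq_trans (leq_card_setU _ _) _; exact: leq_add).
Qed.
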